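(* Let $T$ be a semi-complete digraph on $n$ vertices that admits an ordering $(v_1,\dots,v_n)$ of cost at most $k$. Then the width of this ordering is at most $(4k)^{2/3}$.
   Context: A simple digraph (no loops, no multiple arcs) $T$ is semi-complete if for every pair of distinct vertices $v,w$ at least one of $(v,w),(w,v)$ is an arc. The cost of an ordering $(v_1,\dots,v_n)$ of $V(T)$ is $\sum_{(v_i,v_j)\in E(T),\,i>j}(i-j)$. The width of the ordering is $\max_{1\le t\le n-1}|E(\{v_{t+1},\dots,v_n\},\{v_1,\dots,v_t\})|$, where $E(A,B)$ is the set of arcs with tail in $A$ and head in $B$. *)

(* Defs.v *)
From mathcomp Require Import all_boot.
Set Implicit Arguments. Unset Strict Implicit. Unset Printing Implicit Defensive.

(* A simple digraph on a finite vertex type T is an arc relation E : rel T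
   (E v w means (v,w) is an arc); "no multiple arcs" is automatic for a
   relation, "no loops" is irreflexivity. *)
Definition semicomplete (T : finType) (E : rel T) : Prop :=
  irreflexive E /\ (forall v w : T, v != w -> E v w || E w v).

(* An ordering (v_1,...,v_n) of V(T) is a bijection f : 'I_n -> T,
   with v_{i+1} = f i (0-indexed positions). *)

Definition ord_cost (T : finType) (E : rel T) (n : nat) (f : 'I_n -> T) : nat :=
  \sum_(p : 'I_n * 'I_n | (p.2 < p.1) && E (f p.1) (f p.2)) (p.1 - p.2).

(* |E({v_{t+1},...,v_n}, {v_1,...,v_t})|: in 0-indexed positions, the tails
   are at positions >= t and heads at positions < t. *)
Definition cut_size (T : finType) (E : rel T) (n : nat) (f : 'I_n -> T)
    (t : nat) : nat :=
  #|[set p : 'I_n * 'I_n | [&& t <= p.1, p.2 < t & E (f p.1) (f p.2)]]|.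

Definition ord_width (T : finType) (E : rel T) (n : nat) (f : 'I_n -> T) : nat :=
  \max_(t < n | 0 < t) cut_size E f t.

(* Main.v *)
Require Import Defs.
From mathcomp Require Import all_boot.
From mathcomp Require Import zify.
From Stdlib Require PeanoNat.

Ltac canon n := repeat match goal with
 | H : context [@fst ?A ?B ?p] |- _ => progress change (@fst A B p) with (@fst 'I_n 'I_n p) in H
 | H : context [@snd ?A ?B ?p] |- _ => progress change (@snd A B p) with (@snd 'I_n 'I_n p) in H
 | |- context [@fst ?A ?B ?p] => progress change (@fst A B p) with (@fst 'I_n 'I_n p)
 | |- context [@snd ?A ?B ?p] => progress change (@snd A B p) with (@snd 'I_n 'I_n p)
 end.

Section Aux.
Variables (n t : nat) (S : {set 'I_n * 'I_n}).
Hypothesis HS : forall p, p \in S -> t <= p.1 /\ p.2 < t.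

Lemma card_eq_len m : #|[set p in S | p.1 - p.2 == m]| <= m.
Proof.
rewrite cardE.
set s := enum _.
have -> : m = size (iota 0 m) by rewrite size_iota.
rewrite -(size_map (fun p : 'I_n * 'I_n => p.1 - t)).
apply: uniq_leq_size.
  rewrite map_inj_in_uniq ?enum_uniq //.
  move=> p q; rewrite !mem_enum !inE => /andP[pS /eqP pm] /andP[qS /eqP qm] e.
  have [hp1 hp2] := HS _ pS; have [hq1 hq2] := HS _ qS.
  have e1 : p.1 = q.1 by apply: ord_inj; move: e hp1 hq1; clear; rewrite /=; move=> e h1 h2; have := (e : (p.1 - t)%N = (q.1 - t)%N); lia.
  have e2 : p.2 = q.2 by apply: ord_inj; have := (pm : (p.1 - p.2)%N = m); have := (qm : (q.1 - q.2)%N = m); have := congr1 (@nat_of_ord n) e1; lia.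
  by case: p q e1 e2 {pS qS pm qm hp1 hp2 hq1 hq2 e} => [? ?] [? ?] /= -> ->.
move=> x /mapP [p]; rewrite mem_enum inE => /andP[pS /eqP pm] ->.
have [h1 h2] := HS _ pS.
rewrite mem_iota; apply/andP; split => //; have := (pm : (p.1 - p.2)%N = m); rewrite add0n => H.
canon n; lia.
Qed.

Lemma card_lt_len m : 2 * #|[set p in S | p.1 - p.2 < m]| <= m * (m - 1).
Proof.
elim: m => [|m IH].
  by rewrite leqn0 muln_eq0 cards_eq0; apply/orP; right; apply/eqP/setP => p; rewrite !inE ltn0 andbF.
have sub : [set p in S | p.1 - p.2 < m.+1] \subset
   [set p in S | p.1 - p.2 < m] :|: [set p in S | p.1 - p.2 == m].
  apply/subsetP => p; rewrite !inE ltnS leq_eqVlt => /andP[-> /orP[->|->]] //; by rewrite orbT.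
have h1 := subset_leq_card sub.
have h2 := leq_card_setU [set p in S | p.1 - p.2 < m] [set p in S | p.1 - p.2 == m].
have h3 := card_eq_len m.
apply: (leq_trans (leq_mul (leqnn 2) (leq_trans h1 h2))); rewrite mulnDr.
apply: (leq_trans (leq_add IH (leq_mul (leqnn 2) h3))).
case: m {IH h1 h2 h3 sub} => [|m] //; nia.
Qed.

Lemma sum_lb m : m * #|S| <= \sum_(p in S) (p.1 - p.2) + m * #|[set p in S | p.1 - p.2 < m]|.
Proof.
have -> : #|[set p in S | p.1 - p.2 < m]| = \sum_(p in S) ((p.1 - p.2 < m) : nat).
  rewrite -sum1_card big_mkcond [RHS]big_mkcond; apply: eq_bigr => p _.
  by rewrite !inE; case: (p \in S); case: (_ < _).
rewrite -sum1_card !big_distrr -big_split /=; apply: leq_sum => p _.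
rewrite muln1; case: ltnP => /= h; lia.
Qed.

Lemma cut_bound L : \sum_(p in S) (p.1 - p.2) <= L -> #|S| ^ 3 <= (4 * L) ^ 2.
Proof.
move=> hL.
set w := #|S|.
case: (posnP w) => [w0 | wpos]; first by rewrite w0.
have [hs1 hs2] := PeanoNat.Nat.sqrt_spec w (PeanoNat.Nat.le_0_l w).
set m := Nat.sqrt w in hs1 hs2.
have hs1' : m * m <= w by apply/leP.
have hs2' : w < m.+1 * m.+1 by apply/ltP.
have mpos : 0 < m by case: m {hs1 hs2} hs1' hs2' => // _; lia.
have h1 := sum_lb m; have h2 := card_lt_len m.
have h3 : m * w <= 2 * L by nia.
have h4 : w <= 4 * (m * m) by nia.
have h5 : w ^ 3 <= 4 * (m * w) ^ 2.
  rewrite !expnS expn0 !muln1.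
  have : w * (w * w) <= (4 * (m * m)) * (w * w) by rewrite leq_mul2r h4 orbT.
  lia.
apply: (leq_trans h5).
have : (m * w) ^ 2 <= (2 * L) ^ 2 by rewrite leq_exp2r.
rewrite !expnMn; lia.
Qed.

End Aux.

Theorem mainTheorem13 (T : finType) (E : rel T) (n : nat) (f : 'I_n -> T)
    (k : nat) :
  semicomplete E -> bijective f -> ord_cost E f <= k ->
  ord_width E f ^ 3 <= (4 * k) ^ 2.
Proof.
move=> _ _ hk.
rewrite /ord_width.
elim/big_ind: _ => //.
  move=> x y hx hy.
  have [->|->] : maxn x y = x \/ maxn x y = y by lia.
    exact: hx.
  exact: hy.
move=> t _.
rewrite /cut_size.
set S := [set p : 'I_n * 'I_n | _].
apply: (@cut_bound n t S).
  by move=> p; rewrite inE => /and3P[].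
apply: leq_trans hk.
rewrite /ord_cost big_mkcond [X in _ <= X]big_mkcond /=.
apply: leq_sum => p _.
rewrite inE; case/boolP: [&& _, _ & _] => // /and3P[h1 h2 ->].
by rewrite (leq_trans h2 h1).
Qed.
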